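(* There exists a locally finite poset $P$ with a minimum element such that: (a) $P$ has the Möbius nonvanishing property: for every $x\in P$, the set $\{y\in P : \mu_P(x,y)\neq 0\}$ is infinite; and (b) $P$ does not have property $\mathcal{H}_2$: there is a two-element subset $S\subset P$ such that for each $z\in S$ there are only finitely many $x\in P$ with $x\geqslant z$ and $x\not\geqslant y$ for the other element $y\in S\setminus\{z\}$. In particular, $P$ has the Möbius nonvanishing property but does not have the Möbius uncertainty property, i.e. there exist functions $f,g:P\to\mathbb{C}$, neither identically zero, with $g(z)=\sum_{x\leqslant z}f(x)$ for all $z\in P$ and both $\{x: f(x)\neq 0\}$ and $\{x:g(x)\neq0\}$ finite.
   Context: A poset is locally finite if every interval $[x,y]=\{z: x\leqslant z\leqslant y\}$ is finite. The Möbius function $\mu_P$ of $P$ is defined on pairs $x,y\in P$ by $\mu_P(x,y)=1$ if $x=y$, $\mu_P(x,y)=-\sum_{x\leqslant z<y}\mu_P(x,z)$ if $x<y$, and $\mu_P(x,y)=0$ if $x\not\leqslant y$. *)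

(* Defs.v *)
From HB Require Import structures.
From mathcomp Require Import all_boot all_order all_algebra.
From mathcomp Require Import complex Rstruct.
Set Implicit Arguments. Unset Strict Implicit. Unset Printing Implicit Defensive.
Import Order.TTheory GRing.Theory Num.Theory.
Local Open Scope order_scope.

Notation Cx := (Rdefinitions.R[i]).

Definition fin_set (T : Type) (A : T -> Prop) : Prop :=
  exists s : seq T, forall z, A z -> List.In z s.

Definition enumerates (T : eqType) (s : seq T) (A : T -> Prop) : Prop :=
  uniq s /\ forall z, (z \in s) <-> A z.

Definition locally_finite (d : Order.disp_t) (T : porderType d) : Prop :=
  forall x y : T, fin_set (fun z => x <= z <= y).

Definition has_minimum (d : Order.disp_t) (T : porderType d) : Prop :=
  exists m : T, forall x : T, m <= x.

(* The (finite, by local finiteness) sum is taken along any duplicate-free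
   enumeration of the half-open interval [x,y). *)
Definition is_mobius (d : Order.disp_t) (T : porderType d) (mu : T -> T -> int) : Prop :=
  (forall x : T, mu x x = 1%R) /\
  (forall x y : T, x < y -> forall s : seq T, enumerates s (fun z => x <= z < y) ->
       mu x y = (- \sum_(z <- s) mu x z)%R) /\
  (forall x y : T, ~~ (x <= y) -> mu x y = 0%R).

Definition mobius_nonvanishing (d : Order.disp_t) (T : porderType d) (mu : T -> T -> int) : Prop :=
  forall x : T, ~ fin_set (fun y => mu x y != 0%R).

Definition not_H2 (d : Order.disp_t) (T : porderType d) : Prop :=
  exists a b : T, a != b /\
    fin_set (fun x => a <= x /\ ~~ (b <= x)) /\
    fin_set (fun x => b <= x /\ ~~ (a <= x)).

Definition not_mobius_uncertainty (d : Order.disp_t) (T : porderType d) : Prop :=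
  exists f g : T -> Cx,
    (exists x, f x != 0%R) /\ (exists x, g x != 0%R) /\
    (forall z : T, forall s : seq T, enumerates s (fun x => x <= z) ->
        g z = (\sum_(x <- s) f x)%R) /\
    fin_set (fun x => f x != 0%R) /\ fin_set (fun x => g x != 0%R).

(* Main.v *)
Require Import Defs.
From HB Require Import structures.
From mathcomp Require Import all_boot all_order all_algebra.
From mathcomp Require Import complex Rstruct zify.
Set Implicit Arguments. Unset Strict Implicit. Unset Printing Implicit Defensive.
Import Order.TTheory GRing.Theory Num.Theory.

Definition P : Type := nat.
HB.instance Definition _ := Choice.on P.

Definition lvl (n : P) : nat := (n.+1) %/ 2.
Definition ple (x y : P) : bool := (x == y) || (lvl x < lvl y)%N.

Lemma ple_refl : reflexive ple.
Proof. by move=> x; rewrite /ple eqxx. Qed.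
Lemma ple_anti : antisymmetric ple.
Proof.
move=> x y; rewrite /ple => /andP[/orP[/eqP//|h1] /orP[/eqP//|h2]].
by move: (ltn_trans h1 h2); rewrite ltnn.
Qed.
Lemma ple_trans : transitive ple.
Proof.
move=> y x z; rewrite /ple => /orP[/eqP->//|h1] /orP[/eqP<-|h2]; rewrite ?h1 ?orbT //.
by rewrite (ltn_trans h1 h2) orbT.
Qed.

Fact pdisp : Order.disp_t. Proof. exact: Order.Disp tt tt. Qed.
HB.instance Definition _ := Order.Le_isPOrder.Build pdisp P ple_refl ple_anti ple_trans.

Lemma leE (x y : P) : (x <= y)%O = (x == y) || (lvl x < lvl y)%N.
Proof. by []. Qed.
Lemma ltE (x y : P) : (x < y)%O = (lvl x < lvl y)%N.
Proof.
rewrite Order.POrderTheory.lt_def leE.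
by have [->|ne] := eqVneq x y; rewrite ?ltnn.
Qed.

Lemma lvl_le (x : P) : (lvl x <= x)%N.
Proof. rewrite /lvl; lia. Qed.
Lemma lvl_mono (x y : P) : (x <= y)%N -> (lvl x <= lvl y)%N.
Proof. rewrite /lvl => h; apply: leq_div2r; lia. Qed.
Lemma lt_nat (x y : P) : (x < y)%O -> (x < y)%N.
Proof. rewrite ltE /lvl; lia. Qed.
Lemma le_nat (x y : P) : (x <= y)%O -> (x <= y)%N.
Proof. rewrite leE => /orP[/eqP->//|]; rewrite /lvl; lia. Qed.

Local Open Scope ring_scope.

Definition mymu (x y : P) : int :=
  if x == y then 1 else if (lvl x < lvl y)%N then (-1) ^+ (lvl y - lvl x) else 0.

Definition canon (x y : P) : seq P := x :: iota (2 * lvl x).+1 (2 * (lvl y - lvl x).-1).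

Lemma canon_enum (x y : P) : (x < y)%O -> enumerates (canon x y) (fun z => (x <= z < y)%O).
Proof.
rewrite ltE => hxy; split.
  rewrite /canon /= iota_uniq andbT mem_iota negb_and -leqNgt.
  have -> : (x <= 2 * lvl x)%N by rewrite /lvl; lia.
  by [].
move=> z; rewrite /canon inE mem_iota ltE leE.
have [->|nzx] := eqVneq z x; first by rewrite hxy.
rewrite /=; rewrite /lvl in hxy *; split.
  move=> /andP[h1 h2]; apply/andP; split; lia.
move=> /andP[h1 h2]; apply/andP; split; lia.
Qed.

Lemma sum_iota (L k : nat) :
  1 + \sum_(z <- iota (2 * L).+1 (2 * k)) (-1) ^+ (lvl z - L) = (-1) ^+ k :> int.
Proof.
elim: k => [|k IH]; first by rewrite big_nil addr0.
have -> : (2 * k.+1 = 2 * k + 2)%N by lia.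
rewrite iotaD big_cat /= !big_cons big_nil addr0 [1 + (_ + _)]addrA IH.
have -> : (lvl ((2 * L).+1 + 2 * k) - L = k.+1)%N by rewrite /lvl; lia.
have -> : (lvl ((2 * L).+1 + 2 * k).+1 - L = k.+1)%N by rewrite /lvl; lia.
by rewrite exprS mulN1r addrA subrr sub0r.
Qed.

Lemma enum_perm (s t : seq P) (A : P -> Prop) :
  enumerates s A -> enumerates t A -> perm_eq s t.
Proof.
move=> [us hs] [ut ht]; apply: uniq_perm => // z.
by apply/idP/idP => h; [apply/ht/hs | apply/hs/ht].
Qed.

Lemma mymu_rec (x y : P) : (x < y)%O ->
  mymu x y = - \sum_(z <- canon x y) mymu x z.
Proof.
move=> hxy; have := hxy; rewrite ltE => hl.
rewrite /canon big_cons /mymu eqxx.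
have -> : (x == y) = false by apply/negbTE; apply: contraTneq hl => ->; rewrite ltnn.
rewrite hl.
rewrite (eq_big_seq (fun z => (-1) ^+ (lvl z - lvl x))); last first.
  move=> z; rewrite mem_iota => hz.
  have -> : (x == z) = false by apply/negbTE; apply/eqP => e; subst z; have := lvl_le x; rewrite /lvl in hz *; lia.
  by have -> : (lvl x < lvl z)%N by rewrite /lvl in hz *; lia.
rewrite sum_iota.
have -> : (lvl y - lvl x = (lvl y - lvl x).-1.+1)%N by lia.
by rewrite exprS mulN1r.
Qed.

Lemma mymu_mobius : is_mobius mymu.
Proof.
split; first by move=> x; rewrite /mymu eqxx.
split.
  move=> x y hxy s hs; rewrite (mymu_rec hxy).
  by rewrite (perm_big _ (enum_perm hs (canon_enum hxy))).
move=> x y; rewrite leE negb_or /mymu => /andP[/negPf -> /negPf ->] //.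
Qed.

Lemma mobius_uniq (mu : P -> P -> int) : is_mobius mu -> forall x y, mu x y = mymu x y.
Proof.
move=> [h1 [h2 h3]] x y.
elim/ltn_ind: y => y IH.
have [<-|nxy] := eqVneq x y; first by rewrite h1 /mymu eqxx.
case hle: (x <= y)%O; last first.
  by rewrite h3 ?hle // mymu_mobius.2.2 ?hle.
have hlt : (x < y)%O by rewrite Order.POrderTheory.lt_neqAle nxy hle.
rewrite (h2 _ _ hlt _ (canon_enum hlt)) mymu_rec //; congr (- _).
apply: eq_big_seq => z hz; apply: IH; apply: lt_nat.
by have /andP[] := ((canon_enum hlt).2 z).1 hz.
Qed.

Lemma in_In (T : eqType) (x : T) (s : seq T) : x \in s -> List.In x s.
Proof.
elim: s => [|y s IH] //=; rewrite inE => /orP[/eqP->|/IH]; by [left|right].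
Qed.

Lemma In_sumn (x : nat) (s : seq nat) : List.In x s -> (x <= sumn s)%N.
Proof.
elim: s => [|y s IH] //= [->|/IH]; lia.
Qed.

Definition ff (x : P) : Cx := (x == (1 : P))%:R - (x == (2 : P))%:R.
Definition gg (z : P) : Cx := (((1 : P) <= z)%O)%:R - (((2 : P) <= z)%O)%:R.

Lemma sum_ind (a : P) (s : seq P) : uniq s ->
  \sum_(x <- s) ((x == a)%:R : Cx) = (a \in s)%:R.
Proof.
elim: s => [|x s IH] /=; first by rewrite big_nil.
move=> /andP[nx us]; rewrite big_cons IH // in_cons.
have [e|nxa] := eqVneq x a; first by subst x; rewrite (negPf nx) addr0.
by rewrite add0r.
Qed.


Theorem theorem1p6 :
  exists (d : Order.disp_t) (T : porderType d),
    locally_finite T /\ has_minimum T /\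
    (exists mu : T -> T -> int, is_mobius mu) /\
    (forall mu : T -> T -> int, is_mobius mu -> mobius_nonvanishing mu) /\
    not_H2 T /\
    not_mobius_uncertainty T.
Proof.
exists pdisp, P; split.
  move=> x y; exists (iota 0 y.+1) => z /andP[_ /le_nat hz]; apply: in_In.
  by rewrite mem_iota.
split.
  exists (0 : P) => x; rewrite leE; case: x => [|x] //=.
  by rewrite /lvl; lia.
split; first by exists mymu; exact: mymu_mobius.
split.
  move=> mu hmu x [s hs].
  pose y : P := (sumn s + 2 * x + 2)%N.
  have hxy : (lvl x < lvl y)%N by rewrite /lvl /y; lia.
  have : (y <= sumn s)%N.
    apply: In_sumn; apply: hs; rewrite (mobius_uniq hmu) /mymu hxy.
    have -> : (x == y) = false by apply/negbTE; apply: contraTneq hxy => ->; rewrite ltnn.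
    by rewrite expf_neq0.
  rewrite /y; lia.
split.
  exists (1 : P), (2 : P); split; first by [].
  split.
    exists [:: (1 : P)] => x []; rewrite !leE /=.
    case: x => [|[|[|n]]] //=; rewrite /lvl; lia.
  exists [:: (2 : P)] => x []; rewrite !leE /=.
  case: x => [|[|[|n]]] //=; rewrite /lvl; lia.
exists ff, gg; split.
  by exists (1 : P); rewrite /ff /= subr0 oner_neq0.
split.
  by exists (1 : P); rewrite /gg !leE /= subr0 oner_neq0.
split.
  move=> z s [us hs]; rewrite /ff sumrB !sum_ind // /gg.
  have e1 : ((1 : P) \in s) = ((1 : P) <= z)%O by apply/idP/idP => /hs.
  have e2 : ((2 : P) \in s) = ((2 : P) <= z)%O by apply/idP/idP => /hs.
  by rewrite e1 e2.
split.
  exists [:: (1 : P); (2 : P)] => x; rewrite /ff.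
  case: x => [|[|[|n]]] /=; rewrite ?subrr ?eqxx //; auto.
exists [:: (1 : P); (2 : P)] => x; rewrite /gg !leE.
case: x => [|[|[|n]]] /=; rewrite ?subrr ?eqxx //; auto.
Qed.
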